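(* Suppose the expanded system is time-invariant. Let $\tilde\beta\in(0,1)$ and $K\in\mathbb{R}^{m\times n}$. If there exist symmetric positive definite $P^{(k)}\in\mathbb{R}^{\tilde n\times\tilde n}$ for $k\in\{1,\dots,N\}$ and $G\in\mathbb{R}^{\tilde n\times\tilde n}$ such that $$\begin{bmatrix}\tilde\beta^2P^{(k)} & \mathcal{C}(F^{(k)}(K))^\top G\\ G^\top\mathcal{C}(F^{(k)}(K)) & G^\top+G-P^{(k)}\end{bmatrix}\succeq0\quad\text{for all }k\in\{1,\dots,N\},$$ then the expanded system $\tilde x_{t+1}=\mathcal{C}(F(\tilde\theta_t,K))\tilde x_t$ with this gain $K$ is exponentially robustly stable with rate $\tilde\beta$.
   Context: Let $n,m,N$ be positive integers, $\tilde n=n(n+1)/2$. $\mathrm{vec}$ stacks columns; $\mathrm{vech}(X)$ stacks columnwise the entries on and below the diagonal of square $X$. $E_e\in\mathbb{R}^{\tilde n\times n^2}$ satisfies $E_e\mathrm{vec}(X)=\mathrm{vech}(X)$ for all $X\in\mathbb{R}^{n\times n}$, $D\in\mathbb{R}^{n^2\times\tilde n}$ satisfies $D\mathrm{vech}(Y)=\mathrm{vec}(Y)$ for all symmetric $Y$, and $\mathcal{C}(Y):=E_eYD$. Given symmetric $M^{(1)},\dots,M^{(N)}\in\mathbb{R}^{n(n+m)\times n(n+m)}$ (vertices of the second moment of $\mathrm{vec}([A_t,B_t])$ of an SMP system $x_{t+1}=A_t(\theta_t)x_t+B_t(\theta_t)u_t$ with $\mathrm{E}[v_tv_t^\top|\theta]=\sum_k[\phi(\theta_t)]_kM^{(k)}$,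 $\phi:\mathbb{S}_\theta\to\mathbb{P}_N=\{\varphi\in\mathbb{R}^N:\varphi_k\ge0,\sum\varphi_k=1\}$), partition $M^{(k)}$ into blocks $M^{(k)}_{i,j}\in\mathbb{R}^{n\times n}$, $i,j\le n+m$. Column $n(j-1)+i$ of $F^{(k)}_{aa}\in\mathbb{R}^{n^2\times n^2}$ is $\mathrm{vec}(M^{(k)}_{i,j})$; column $m(j-1)+i'$ of $F^{(k)}_{ab}\in\mathbb{R}^{n^2\times nm}$ is $\mathrm{vec}(M^{(k)}_{n+i',j})$; column $n(j'-1)+i$ of $F^{(k)}_{ba}\in\mathbb{R}^{n^2\times nm}$ is $\mathrm{vec}(M^{(k)}_{i,n+j'})$; column $m(j'-1)+i'$ of $F^{(k)}_{bb}\in\mathbb{R}^{n^2\times m^2}$ is $\mathrm{vec}(M^{(k)}_{n+i',n+j'})$ ($i,j\le n$, $i',j'\le m$). $F^{(k)}(K):=F^{(k)}_{aa}-F^{(k)}_{ab}(I_n\otimes K)-F^{(k)}_{ba}(K\otimes I_n)+F^{(k)}_{bb}(K\otimes K)$, $F(\tilde\theta,K):=\sum_{k=1}^N[\tilde\theta]_kF^{(k)}(K)$. The expanded system is $\tilde x_{t+1}=\mathcal{C}(F(\tilde\theta_t,K))\tilde x_t$, $\tilde x_t\in\mathbb{R}^{\tilde n}$, $\tilde\theta_t\in\tilde{\mathbb{S}}:=\phi(\mathbb{S}_\theta)\subseteq\mathbb{P}_N$. Time-invariant means $\tilde\theta_t=\tilde\theta$ is constant in $t$ (so parameter sequences are constant).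 Exponentially robustly stable with rate $\tilde\beta$: there is $\tilde\alpha\in(0,\infty)$ with $\|\tilde x_t\|\le\tilde\alpha\|\tilde x_0\|\tilde\beta^t$ for all $\tilde x_0\in\mathbb{R}^{\tilde n}$, all admissible parameter sequences in $\tilde{\mathbb{S}}$, and all $t\ge0$. *)

(* Defs.v *)
From HB Require Import structures.
From mathcomp Require Import all_boot all_order all_algebra.
From mathcomp Require Import reals.
Set Implicit Arguments. Unset Strict Implicit. Unset Printing Implicit Defensive.
Import Order.TTheory GRing.Theory Num.Theory.
Local Open Scope ring_scope.

Section Defs.
Variable R : realType.

(* entry (i,j) of a matrix using 0-based natural-number indices; 0 if out of range *)
Definition mxent (p q : nat) (A : 'M[R]_(p, q)) (i j : nat) : R :=
  match @insub _ (fun k => k < p)%N 'I_p i, @insub _ (fun k => k < q)%N 'I_q j with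
  | Some i', Some j' => A i' j'
  | _, _ => 0
  end.

Definition ntil (n : nat) : nat := (n * n.+1)./2.

(* vec: stacks the columns; 0-based entry j*n + i is X_{i,j} *)
Definition vec (n : nat) (X : 'M[R]_n) : 'cV[R]_(n * n) :=
  \col_(k < n * n) mxent X (k %% n) (k %/ n).

(* 0-based (row, column) pairs of the entries on and below the diagonal,
   listed columnwise *)
Definition vech_pairs (n : nat) : seq (nat * nat) :=
  flatten [seq [seq (i, j) | i <- iota j (n - j)] | j <- iota 0 n].

Definition vech (n : nat) (X : 'M[R]_n) : 'cV[R]_(ntil n) :=
  \col_(k < ntil n)
     mxent X (nth (0, 0)%N (vech_pairs n) k).1 (nth (0, 0)%N (vech_pairs n) k).2.

Definition kron (m1 n1 m2 n2 : nat) (A : 'M[R]_(m1, n1)) (B : 'M[R]_(m2, n2))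
  : 'M[R]_(m1 * m2, n1 * n2) :=
  \matrix_(r, c) (mxent A (r %/ m2) (c %/ n2) * mxent B (r %% m2) (c %% n2)).

Definition blk (n m : nat) (M : 'M[R]_(n * (n + m))) (i j : nat) : 'M[R]_n :=
  \matrix_(r < n, c < n) mxent M (i * n + r) (j * n + c).

(* column n(j-1)+i (1-based) is vec(M_{i,j}), i,j <= n *)
Definition Faa (n m : nat) (M : 'M[R]_(n * (n + m))) : 'M[R]_(n * n, n * n) :=
  \matrix_(p, q) vec (blk M (q %% n) (q %/ n)) p ord0.
(* column m(j-1)+i' is vec(M_{n+i',j}), i' <= m, j <= n *)
Definition Fab (n m : nat) (M : 'M[R]_(n * (n + m))) : 'M[R]_(n * n, n * m) :=
  \matrix_(p, q) vec (blk M (n + q %% m) (q %/ m)) p ord0.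
(* column n(j'-1)+i is vec(M_{i,n+j'}), i <= n, j' <= m *)
Definition Fba (n m : nat) (M : 'M[R]_(n * (n + m))) : 'M[R]_(n * n, m * n) :=
  \matrix_(p, q) vec (blk M (q %% n) (n + q %/ n)) p ord0.
(* column m(j'-1)+i' is vec(M_{n+i',n+j'}), i',j' <= m *)
Definition Fbb (n m : nat) (M : 'M[R]_(n * (n + m))) : 'M[R]_(n * n, m * m) :=
  \matrix_(p, q) vec (blk M (n + q %% m) (n + q %/ m)) p ord0.

Definition Fk (n m : nat) (M : 'M[R]_(n * (n + m))) (K : 'M[R]_(m, n))
  : 'M[R]_(n * n) :=
  Faa M - Fab M *m kron (1%:M : 'M[R]_n) K - Fba M *m kron K (1%:M : 'M[R]_n)
  + Fbb M *m kron K K.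

Definition Fth (n m N : nat) (M : 'I_N -> 'M[R]_(n * (n + m))) (th : 'cV[R]_N)
  (K : 'M[R]_(m, n)) : 'M[R]_(n * n) :=
  \sum_(k < N) th k ord0 *: Fk (M k) K.

Definition Cop (n : nat) (Ee : 'M[R]_(ntil n, n * n)) (D : 'M[R]_(n * n, ntil n))
  (Y : 'M[R]_(n * n)) : 'M[R]_(ntil n) := Ee *m Y *m D.

Definition simplex (N : nat) (v : 'cV[R]_N) : Prop :=
  (forall k, 0 <= v k ord0) /\ \sum_(k < N) v k ord0 = 1.

Definition psd (p : nat) (A : 'M[R]_p) : Prop :=
  A^T = A /\ forall x : 'cV[R]_p, 0 <= (x^T *m A *m x) ord0 ord0.
Definition pd (p : nat) (A : 'M[R]_p) : Prop :=
  A^T = A /\ forall x : 'cV[R]_p, x != 0 -> 0 < (x^T *m A *m x) ord0 ord0.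

Definition vnorm (p : nat) (x : 'cV[R]_p) : R :=
  Num.sqrt (\sum_(i < p) x i ord0 ^+ 2).

Definition traj (p : nat) (A : 'M[R]_p) (x0 : 'cV[R]_p) (t : nat) : 'cV[R]_p :=
  iter t (fun x => A *m x) x0.

End Defs.

(* Main.v *)
Require Import Defs.
From HB Require Import structures.
From mathcomp Require Import all_boot all_order all_algebra.
From mathcomp Require Import reals.
From mathcomp Require Import ring lra.
Import Order.TTheory GRing.Theory Num.Theory.
Local Open Scope ring_scope.
Set Implicit Arguments. Unset Strict Implicit.
Definition qf (R : realType) (p : nat) (Q : 'I_p -> 'I_p -> R) (x : 'I_p -> R) : R :=
  \sum_(j < p) (\sum_(i < p) x i * Q i j) * x j.
Definition sq (R : realType) (p : nat) (x : 'I_p -> R) : R := \sum_(i < p) x i ^+ 2.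

Lemma sq_ge0 (R : realType) p (x : 'I_p -> R) : 0 <= sq x.
Proof. by apply: sumr_ge0 => i _; rewrite sqr_ge0. Qed.

Lemma sq_le (R : realType) p (x : 'I_p -> R) i : x i ^+ 2 <= sq x.
Proof.
rewrite /sq (bigD1 i) //= lerDl; by apply: sumr_ge0 => j _; rewrite sqr_ge0.
Qed.

Lemma abs_le_sqrt (R : realType) p (x : 'I_p -> R) i : `|x i| <= Num.sqrt (sq x).
Proof. by rewrite -sqrtr_sqr ler_wsqrtr // sq_le. Qed.

Lemma qf_upper (R : realType) p (Q : 'I_p -> 'I_p -> R) (x : 'I_p -> R) :
  qf Q x <= (\sum_(j < p) \sum_(i < p) `|Q i j|) * sq x.
Proof.
rewrite /qf mulr_suml; apply: ler_sum => j _.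
rewrite mulr_suml mulr_suml; apply: ler_sum => i _.
have h1 := abs_le_sqrt x i; have h2 := abs_le_sqrt x j.
have hs : Num.sqrt (sq x) * Num.sqrt (sq x) = sq x by rewrite -expr2 sqr_sqrtr // sq_ge0.
apply: (le_trans (ler_norm _)).
rewrite !normrM -hs [`|x i| * _]mulrC -mulrA; apply: ler_wpM2l => //.
apply: ler_pM => //.
Qed.
Lemma qf_decomp (R : realType) p (Q : 'I_p.+1 -> 'I_p.+1 -> R) (x : 'I_p.+1 -> R) :
  (forall i j, Q i j = Q j i) ->
  qf Q x = Q ord0 ord0 * x ord0 ^+ 2
         + 2 * x ord0 * (\sum_(i < p) Q ord0 (lift ord0 i) * x (lift ord0 i))
         + qf (p:=p) (fun i j => Q (lift ord0 i) (lift ord0 j)) (fun i => x (lift ord0 i)).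
Proof.
move=> HQ; rewrite /qf (big_ord_recl p) /= (big_ord_recl p) /=.
under [X in _ + X = _]eq_bigr => j _ do rewrite big_ord_recl mulrDl.
rewrite big_split /= mulrDl.
have -> : (\sum_(i < p) x (lift ord0 i) * Q (lift ord0 i) ord0) * x ord0
   = x ord0 * \sum_(i < p) Q ord0 (lift ord0 i) * x (lift ord0 i).
  rewrite mulr_suml mulr_sumr; apply: eq_bigr => i _; rewrite HQ; ring.
have -> : \sum_(i < p) x ord0 * Q ord0 (lift ord0 i) * x (lift ord0 i)
   = x ord0 * \sum_(i < p) Q ord0 (lift ord0 i) * x (lift ord0 i).
  rewrite mulr_sumr; apply: eq_bigr => i _; ring.
ring.
Qed.

Lemma qf_rank1 (R : realType) p (b : 'I_p -> R) k (y : 'I_p -> R) :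
  qf (fun i j => b i * b j * k) y = (\sum_(i < p) b i * y i) ^+ 2 * k.
Proof.
set S := \sum_(i < p) b i * y i.
rewrite /qf.
under eq_bigr => j _.
  have -> : \sum_(i < p) y i * (b i * b j * k) = S * (b j * k).
    by rewrite /S mulr_suml; apply: eq_bigr => i _; ring.
  over.
rewrite (eq_bigr (fun j => (b j * y j) * (S * k))); last by move=> j _; ring.
rewrite -mulr_suml -/S; ring.
Qed.

Lemma qfB (R : realType) p (Q1 Q2 : 'I_p -> 'I_p -> R) (y : 'I_p -> R) :
  qf (fun i j => Q1 i j - Q2 i j) y = qf Q1 y - qf Q2 y.
Proof.
rewrite /qf -sumrB; apply: eq_bigr => j _; rewrite -mulrBl -sumrB; congr (_ * _).
by apply: eq_bigr => i _; ring.
Qed.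

Lemma qf_ext (R : realType) p (Q : 'I_p -> 'I_p -> R) (x y : 'I_p -> R) :
  (forall i, x i = y i) -> qf Q x = qf Q y.
Proof.
move=> H; rewrite /qf; apply: eq_bigr => j _; rewrite H; congr (_ * _).
by apply: eq_bigr => i _; rewrite H.
Qed.

Lemma coercive (R : realType) p (Q : 'I_p -> 'I_p -> R) :
  (forall i j, Q i j = Q j i) ->
  (forall x : 'I_p -> R, (exists i, x i != 0) -> 0 < qf Q x) ->
  exists c : R, 0 < c /\ forall x, c * sq x <= qf Q x.
Proof.
elim: p Q => [|p IH] Q HS HP.
  exists 1; split => // x; rewrite /sq /qf !big_ord0; lra.
set a := Q ord0 ord0.
set b := fun i : 'I_p => Q ord0 (lift ord0 i).
set d := fun i j : 'I_p => Q (lift ord0 i) (lift ord0 j).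
have ha : 0 < a.
  have := HP (fun i => if i == ord0 then 1 else 0).
  rewrite qf_decomp //= big1; last by move=> i _; rewrite mulr0.
  rewrite [qf _ _](_ : _ = 0); last by rewrite /qf big1 // => j _; rewrite mulr0.
  rewrite expr1n !mulr0 mulr1 !addr0 => h; apply: h; exists ord0; rewrite eqxx; exact: oner_neq0.
set d' := fun i j => d i j - b i * b j * a^-1.
have Hd' : forall y, qf d' y = qf d y - (\sum_(i < p) b i * y i) ^+ 2 * a^-1.
  by move=> y; rewrite qfB qf_rank1.
have [c [hc Hc]] : exists c : R, 0 < c /\ forall y, c * sq y <= qf d' y.
  apply: IH.
    by move=> i j; rewrite /d' /d /b /= [Q (lift ord0 i) _]HS; ring.
  move=> y [i0 hi0].
  set s := \sum_(i < p) b i * y i.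
  pose x := fun k : 'I_p.+1 => if unlift ord0 k is Some i then y i else - s / a.
  have hx0 : x ord0 = - s / a by rewrite /x unlift_none.
  have hxl : forall i, x (lift ord0 i) = y i by move=> i; rewrite /x liftK.
  have := HP x; rewrite qf_decomp //.
  rewrite (qf_ext _ hxl).
  under eq_bigr => i _ do rewrite hxl.
  rewrite hx0 Hd' -/s -/a.
  have ha0 : a != 0 by rewrite gt_eqF.
  have -> : a * (- s / a) ^+ 2 + 2 * (- s / a) * s = - (s ^+ 2 * a^-1) by field.
  rewrite addrC; apply; exists (lift ord0 i0); by rewrite hxl.
set B := \sum_(j < p) \sum_(i < p) `|b i * b j * 1|.
have HB : forall y, (\sum_(i < p) b i * y i) ^+ 2 <= B * sq y.
  by move=> y; have := qf_upper (fun i j => b i * b j * 1) y; rewrite qf_rank1 mulr1.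
have B0 : 0 <= B by apply: sumr_ge0 => j _; apply: sumr_ge0 => i _.
set L := 2 * B / a ^+ 2 + 1.
have hL : 0 < L.
  have : 0 <= 2 * B / a ^+ 2 by apply: divr_ge0; [apply: mulr_ge0 | apply: sqr_ge0].
  rewrite /L; lra.
exists (Num.min (a / 2) (c / L)); split.
  by rewrite lt_min divr_gt0 // divr_gt0.
move=> x.
rewrite qf_decomp // -/a.
have -> : (\sum_(i < p) Q ord0 (lift ord0 i) * x (lift ord0 i)) = \sum_(i < p) b i * x (lift ord0 i) by [].
set s := \sum_(i < p) b i * x (lift ord0 i).
set y := fun i => x (lift ord0 i).
have -> : qf (fun i j => Q (lift ord0 i) (lift ord0 j)) y = qf d' y + s ^+ 2 * a^-1.
  rewrite Hd' -/s; ring.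
have -> : sq x = x ord0 ^+ 2 + sq y by rewrite /sq big_ord_recl.
set x0 := x ord0.
set u := x0 + s / a.
have ha0 : a != 0 by rewrite gt_eqF.
have E : a * x0 ^+ 2 + 2 * x0 * s + (qf d' y + s ^+ 2 * a^-1) = a * u ^+ 2 + qf d' y.
  by rewrite /u; field.
rewrite E.
have Hx0 : x0 ^+ 2 <= 2 * u ^+ 2 + 2 * B / a ^+ 2 * sq y.
  have e : x0 = u - s / a by rewrite /u; ring.
  have h1 : (s / a) ^+ 2 <= B / a ^+ 2 * sq y.
    rewrite expr_div_n (_ : B / a ^+ 2 * sq y = B * sq y / a ^+ 2); last by ring.
    by apply: ler_wpM2r; [rewrite invr_ge0 sqr_ge0 | apply: HB].
  have h2 : 0 <= (u + s / a) ^+ 2 by rewrite sqr_ge0.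
  rewrite e; nra.
set mu := Num.min (a / 2) (c / L).
have m1 : mu <= a / 2 by rewrite /mu ge_min lexx.
have m2 : mu <= c / L by rewrite /mu ge_min lexx orbT.
have m0 : 0 < mu by rewrite /mu lt_min divr_gt0 // divr_gt0.
have m2' : mu * L <= c by rewrite -ler_pdivlMr.
have hy := Hc y.
have sy := sq_ge0 y.
have u2 := sqr_ge0 u.
have : mu * (x0 ^+ 2 + sq y) <= mu * (2 * u ^+ 2 + L * sq y).
  rewrite ler_pM2l // /L; lra.
have : mu * (2 * u ^+ 2 + L * sq y) <= a * u ^+ 2 + c * sq y.
  have : mu * L * sq y <= c * sq y by rewrite ler_wpM2r.
  have : mu * 2 * u ^+ 2 <= a * u ^+ 2.
    rewrite ler_wpM2r //; lra.
  nra.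
lra.
Qed.
Lemma trZ (R : realType) p q (a : R) (A : 'M[R]_(p, q)) : (a *: A)^T = a *: A^T.
Proof. by apply/matrixP => i j; rewrite !mxE. Qed.
Lemma trN (R : realType) p q (A : 'M[R]_(p, q)) : (- A)^T = - A^T.
Proof. by apply/matrixP => i j; rewrite !mxE. Qed.

Lemma trsum (R : realType) p q (I : Type) (r : seq I) (th : I -> R) (A : I -> 'M[R]_(p, q)) :
  (\sum_(k <- r) th k *: A k)^T = \sum_(k <- r) th k *: (A k)^T.
Proof. rewrite raddf_sum; apply: eq_bigr => k _; exact: trZ. Qed.

Lemma mxq (R : realType) p (x : 'cV[R]_p) (A : 'M[R]_p) :
  (x^T *m A *m x) ord0 ord0 = qf (fun i j => A i j) (fun i => x i ord0).
Proof.
rewrite /qf !mxE; apply: eq_bigr => j _; rewrite !mxE; congr (_ * _).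
by apply: eq_bigr => i _; rewrite !mxE.
Qed.

Lemma qsum (R : realType) p (I : Type) (r : seq I) (th : I -> R) (L : I -> 'M[R]_p) (z : 'cV[R]_p) :
  (z^T *m (\sum_(k <- r) th k *: L k) *m z) ord0 ord0
  = \sum_(k <- r) th k * (z^T *m L k *m z) ord0 ord0.
Proof.
rewrite mulmx_sumr mulmx_suml summxE; apply: eq_bigr => k _.
by rewrite -scalemxAr -scalemxAl mxE.
Qed.

Lemma block_sum (R : realType) p q (I : Type) (r : seq I) (th : I -> R)
  (a : I -> 'M[R]_p) (b : I -> 'M[R]_(p, q)) (c : I -> 'M[R]_(q, p)) (d : I -> 'M[R]_q) :
  \sum_(k <- r) th k *: block_mx (a k) (b k) (c k) (d k)
  = block_mx (\sum_(k <- r) th k *: a k) (\sum_(k <- r) th k *: b k)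
             (\sum_(k <- r) th k *: c k) (\sum_(k <- r) th k *: d k).
Proof.
elim: r => [|k r IH]; first by rewrite !big_nil block_mx0.
by rewrite !big_cons IH scale_block_mx add_block_mx.
Qed.

Lemma pd_coer (R : realType) p (P : 'M[R]_p) : pd P ->
  exists c : R, 0 < c /\ forall x, c * sq x <= qf (fun i j => P i j) x.
Proof.
move=> [HS HP]; apply: coercive.
  by move=> i j; rewrite -{1}HS mxE.
move=> y [i hi].
have := HP (\col_k y k); rewrite mxq.
rewrite (qf_ext _ (y := y)); last by move=> k; rewrite mxE.
apply; apply/eqP => h; move: hi; have := congr1 (fun M : 'cV[R]_p => M i ord0) h.
by rewrite !mxE => ->; rewrite eqxx.
Qed.

Lemma unif_coer (R : realType) p N (P : 'I_N -> 'M[R]_p) : (forall k, pd (P k)) ->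
  exists c : R, 0 < c /\ forall k x, c * sq x <= qf (fun i j => P k i j) x.
Proof.
move=> HP.
suff [c [hc Hc]] : exists c : R, 0 < c /\ forall k, k \in index_enum 'I_N ->
   forall x, c * sq x <= qf (fun i j => P k i j) x.
  by exists c; split => // k; apply: Hc; rewrite mem_index_enum.
elim: (index_enum 'I_N) => [|k r [c [hc Hc]]].
  by exists 1; split.
have [ck [hck Hck]] := pd_coer (HP k).
exists (Num.min c ck); split; first by rewrite lt_min hc hck.
move=> k'; rewrite inE => /orP [/eqP -> | hk] x.
  apply: le_trans (Hck x); apply: ler_wpM2r; [exact: sq_ge0 | by rewrite ge_min lexx orbT].
apply: le_trans (Hc k' hk x); apply: ler_wpM2r; [exact: sq_ge0 | by rewrite ge_min lexx].
Qed.
Unset Implicit Arguments. Set Strict Implicit.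
Theorem theorem4 (R : realType) (n m N : nat) (Hn : (0 < n)%N) (Hm : (0 < m)%N)
  (HN : (0 < N)%N)
  (Ee : 'M[R]_(ntil n, n * n)) (D : 'M[R]_(n * n, ntil n))
  (HEe : forall X : 'M[R]_n, Ee *m vec X = vech X)
  (HD : forall Y : 'M[R]_n, Y^T = Y -> D *m vech Y = vec Y)
  (M : 'I_N -> 'M[R]_(n * (n + m)))
  (HM : forall k, (M k)^T = M k)
  (Theta : Type) (Stheta : Theta -> Prop) (phi : Theta -> 'cV[R]_N)
  (Hphi : forall th, Stheta th -> simplex (phi th))
  (beta : R) (Hbeta0 : 0 < beta) (Hbeta1 : beta < 1)
  (K : 'M[R]_(m, n))
  (P : 'I_N -> 'M[R]_(ntil n)) (G : 'M[R]_(ntil n))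
  (HP : forall k, pd (P k))
  (HLMI : forall k,
     psd (block_mx (beta ^+ 2 *: P k) ((Cop Ee D (Fk (M k) K))^T *m G)
                   (G^T *m Cop Ee D (Fk (M k) K)) (G^T + G - P k))) :
  exists alpha : R, 0 < alpha /\
    forall thtil : 'cV[R]_N, (exists th, Stheta th /\ phi th = thtil) ->
    forall (x0 : 'cV[R]_(ntil n)) (t : nat),
      vnorm (traj (Cop Ee D (Fth M thtil K)) x0 t) <= alpha * vnorm x0 * beta ^+ t.
Proof.
have [c [hc Hc]] := unif_coer HP.
set C := \sum_(k < N) \sum_(j < ntil n) \sum_(i < ntil n) `|P k i j| + 1.
have HC : forall k x, qf (fun i j => P k i j) x <= C * sq x.
  move=> k x; apply: (le_trans (qf_upper _ x)); apply: ler_wpM2r; first exact: sq_ge0.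
  rewrite /C (bigD1 k) //=.
  have : 0 <= \sum_(k0 < N | k0 != k) \sum_(j < ntil n) \sum_(i < ntil n) `|P k0 i j|.
    by apply: sumr_ge0 => k0 _; apply: sumr_ge0 => j _; apply: sumr_ge0.
  lra.
have C0 : 0 < C.
  rewrite /C; have : 0 <= \sum_(k < N) \sum_(j < ntil n) \sum_(i < ntil n) `|P k i j|.
    by apply: sumr_ge0 => k0 _; apply: sumr_ge0 => j _; apply: sumr_ge0.
  lra.
exists (Num.sqrt (C / c)); split; first by rewrite sqrtr_gt0 divr_gt0.
move=> th [th0 [hS <-]] x0 t.
have [Hnn Hs1] := Hphi _ hS.
set T := phi th0.
set Pt := \sum_(k < N) T k ord0 *: P k.
have EA : Cop Ee D (Fth M T K) = \sum_(k < N) T k ord0 *: Cop Ee D (Fk (M k) K).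
  rewrite /Cop /Fth mulmx_sumr mulmx_suml; apply: eq_bigr => k _.
  by rewrite -scalemxAr -scalemxAl.
set At := Cop Ee D (Fth M T K).
pose V := fun x : 'cV[R]_(ntil n) => (x^T *m Pt *m x) ord0 ord0.
have Vlow : forall x : 'cV[R]_(ntil n), c * sq (fun i => x i ord0) <= V x.
  move=> x; rewrite /V qsum.
  rewrite -[c * _]mul1r -Hs1 mulr_suml; apply: ler_sum => k _.
  by apply: ler_wpM2l => //; rewrite mxq; apply: Hc.
have Vup : forall x : 'cV[R]_(ntil n), V x <= C * sq (fun i => x i ord0).
  move=> x; rewrite /V qsum.
  rewrite -[C * _]mul1r -Hs1 mulr_suml; apply: ler_sum => k _.
  by apply: ler_wpM2l => //; rewrite mxq; apply: HC.
have key : forall x : 'cV[R]_(ntil n), V (At *m x) <= beta ^+ 2 * V x.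
  move=> x; set w := At *m x.
  set z := col_mx x (- w).
  have hsum : 0 <= (z^T *m (\sum_(k < N) T k ord0 *:
      block_mx (beta ^+ 2 *: P k) ((Cop Ee D (Fk (M k) K))^T *m G)
                   (G^T *m Cop Ee D (Fk (M k) K)) (G^T + G - P k)) *m z) ord0 ord0.
    rewrite qsum; apply: sumr_ge0 => k _; apply: mulr_ge0 => //.
    exact: (HLMI k).2.
  rewrite block_sum in hsum.
  have e1 : \sum_(k < N) T k ord0 *: (beta ^+ 2 *: P k) = beta ^+ 2 *: Pt.
    rewrite /Pt scaler_sumr; apply: eq_bigr => k _; by rewrite !scalerA mulrC.
  have e2 : \sum_(k < N) T k ord0 *: ((Cop Ee D (Fk (M k) K))^T *m G) = At^T *m G.
    rewrite /At EA trsum mulmx_suml; apply: eq_bigr => k _; by rewrite scalemxAl.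
  have e3 : \sum_(k < N) T k ord0 *: (G^T *m Cop Ee D (Fk (M k) K)) = G^T *m At.
    rewrite /At EA mulmx_sumr; apply: eq_bigr => k _; by rewrite scalemxAr.
  have e4 : \sum_(k < N) T k ord0 *: (G^T + G - P k) = G^T + G - Pt.
    rewrite (eq_bigr (fun k => T k ord0 *: (G^T + G) - T k ord0 *: P k)); last first.
      by move=> k _; rewrite scalerBr.
    by rewrite sumrB -scaler_suml Hs1 scale1r.
  rewrite e1 e2 e3 e4 /z tr_col_mx mul_row_block mul_row_col in hsum.
  have t1 : x^T *m (beta ^+ 2 *: Pt) *m x = beta ^+ 2 *: (x^T *m Pt *m x).
    by rewrite -scalemxAr -scalemxAl.
  have t2 : (- w)^T *m (G^T *m At) *m x = - (w^T *m G^T *m w).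
    by rewrite trN mulNmx mulNmx /w !mulmxA.
  have t3 : x^T *m (At^T *m G) *m - w = - (w^T *m G *m w).
    by rewrite mulmxN /w (trmx_mul At x) !mulmxA.
  have t4 : (- w)^T *m (G^T + G - Pt) *m - w
      = w^T *m G^T *m w + w^T *m G *m w - w^T *m Pt *m w.
    by rewrite trN !mulNmx !mulmxN opprK !mulmxDr !mulmxN !mulmxDl !mulNmx.
  rewrite !mulmxDl t1 t2 t3 t4 in hsum.
  move: hsum; rewrite /V.
  set X1 := x^T *m Pt *m x.
  set X2 := w^T *m G^T *m w.
  set X3 := w^T *m G *m w.
  set X4 := w^T *m Pt *m w.
  rewrite !mxE.
  lra.
have iterV : forall s, V (traj At x0 s) <= (beta ^+ 2) ^+ s * V x0.
  elim=> [|s IH]; first by rewrite expr0 mul1r.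
  rewrite /traj iterS -/(traj At x0 s).
  apply: (le_trans (key _)); rewrite [(beta ^+ 2) ^+ s.+1]exprS -mulrA; apply: ler_wpM2l => //.
  by rewrite sqr_ge0.
set xt := traj At x0 t.
have H1 : c * sq (fun i => xt i ord0) <= C * (beta ^+ t) ^+ 2 * sq (fun i => x0 i ord0).
  apply: (le_trans (Vlow _)); apply: (le_trans (iterV t)).
  rewrite (_ : (beta ^+ 2) ^+ t = (beta ^+ t) ^+ 2); last by rewrite -!exprM mulnC.
  apply: (le_trans (ler_wpM2l (sqr_ge0 (beta ^+ t)) (Vup x0))); by rewrite mulrCA mulrA.
have H2 : sq (fun i => xt i ord0) <= C / c * (beta ^+ t) ^+ 2 * sq (fun i => x0 i ord0).
  rewrite -ler_pdivlMl // in H1; apply: (le_trans H1); rewrite le_eqVlt; apply/orP; left; apply/eqP.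
  by rewrite !mulrA [c^-1 * C]mulrC.
rewrite /vnorm.
have -> : \sum_(i < ntil n) xt i ord0 ^+ 2 = sq (fun i => xt i ord0) by [].
have -> : \sum_(i < ntil n) x0 i ord0 ^+ 2 = sq (fun i => x0 i ord0) by [].
apply: (le_trans (ler_wsqrtr H2)).
have hCc : 0 <= C / c by rewrite divr_ge0 // ltW.
rewrite sqrtrM; last by rewrite mulr_ge0 // sqr_ge0.
rewrite sqrtrM // sqrtr_sqr ger0_norm; last by rewrite exprn_ge0 // ltW.
rewrite le_eqVlt; apply/orP; left; apply/eqP; ring.
Qed.
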